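(* Let $n \in \mathbb N$ and $F\colon\mathbb R_+^n\to \mathbb R_+$. If $F$ is amenable, monotone and quasi-subadditive with a constant $s \geqslant 1$, then $F$ is $(n)$-b-metric preserving, i.e. $F\in P^n_B$.
   Context: $\mathbb R_+=[0,\infty)$. For $\mathbf a,\mathbf b\in\mathbb R_+^n$, $\mathbf a\preceq\mathbf b$ means $a_i\leqslant b_i$ for all $i$, and $\mathbf a+\mathbf b$ is the coordinatewise sum. $F$ is amenable if $F(\mathbf x)=0\iff\mathbf x=(0,\dots,0)$; monotone if $F(\mathbf a)\leqslant F(\mathbf b)$ whenever $\mathbf a\preceq\mathbf b$; quasi-subadditive with constant $s\geqslant1$ if $F(\mathbf a+\mathbf b)\leqslant s(F(\mathbf a)+F(\mathbf b))$ for all $\mathbf a,\mathbf b\in\mathbb R_+^n$. A b-metric on $X$ is $d\colon X^2\to\mathbb R_+$ with $d(x,y)=0\iff x=y$, $d(x,y)=d(y,x)$, and for some $K\geqslant1$, $d(x,z)\leqslant K(d(x,y)+d(y,z))$ for all $x,y,z$. $P^n_B$ is the set of $F$ such that for every collection of b-metric spaces $(X_i,d_i)$, $i=1,\dots,n$ (arbitrary constants), the function $D(\mathbf x,\mathbf y)=F(d_1(x_1,y_1),\dots,d_n(x_n,y_n))$ on $\prod_{i=1}^nX_i$ is a b-metric. *)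

(* Defs.v *)
From Stdlib Require Import Reals.
From mathcomp Require Import ssreflect ssrbool eqtype ssrnat fintype.
Set Implicit Arguments.
Unset Strict Implicit.
Open Scope R_scope.

Definition nonneg_vec (n : nat) (a : 'I_n -> R) : Prop := forall i, 0 <= a i.

Definition maps_into_Rplus (n : nat) (F : ('I_n -> R) -> R) : Prop :=
  forall a, nonneg_vec a -> 0 <= F a.

Definition amenable (n : nat) (F : ('I_n -> R) -> R) : Prop :=
  forall a, nonneg_vec a -> (F a = 0 <-> forall i, a i = 0).

Definition monotone (n : nat) (F : ('I_n -> R) -> R) : Prop :=
  forall a b, nonneg_vec a -> nonneg_vec b ->
    (forall i, a i <= b i) -> F a <= F b.

Definition quasi_subadditive (n : nat) (F : ('I_n -> R) -> R) (s : R) : Prop :=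
  1 <= s /\
  forall a b, nonneg_vec a -> nonneg_vec b ->
    F (fun i => a i + b i) <= s * (F a + F b).

Definition is_bmetric (X : Type) (d : X -> X -> R) : Prop :=
  (forall x y, 0 <= d x y) /\
  (forall x y, d x y = 0 <-> x = y) /\
  (forall x y, d x y = d y x) /\
  (exists K, 1 <= K /\ forall x y z, d x z <= K * (d x y + d y z)).

Definition PnB (n : nat) (F : ('I_n -> R) -> R) : Prop :=
  forall (X : 'I_n -> Type) (d : forall i, X i -> X i -> R),
    (forall i, is_bmetric (d i)) ->
    is_bmetric (fun x y : (forall i, X i) => F (fun i => d i (x i) (y i))).

(* Main.v *)
Require Import Defs.
From Stdlib Require Import Reals.
From mathcomp Require Import ssreflect ssrbool eqtype ssrnat seq fintype.
From Stdlib Require Import Lra ZArith Lia FunctionalExtensionality ClassicalEpsilon.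
Open Scope R_scope.

Lemma exists_nat_ge (K : R) : exists m : nat, K <= INR m.
Proof.
  destruct (archimed K) as [H1 _].
  destruct (Z_le_gt_dec 0 (up K)) as [Hz|Hz].
  - exists (Z.to_nat (up K)). rewrite INR_IZR_INZ Z2Nat.id //. lra.
  - exists 0%nat. simpl. apply Z.gt_lt, IZR_lt in Hz. lra.
Qed.

Lemma fold_max_ge (n : nat) (K : 'I_n -> R) (l : seq 'I_n) i :
  i \in l -> K i <= foldr (fun j acc => Rmax (K j) acc) 1 l.
Proof.
  elim: l => [//|a l IH] /=. rewrite in_cons => /orP [/eqP ->|H].
  - apply Rmax_l.
  - eapply Rle_trans; [apply IH, H| apply Rmax_r].
Qed.

Lemma fold_max_ge1 (n : nat) (K : 'I_n -> R) (l : seq 'I_n) :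
  1 <= foldr (fun j acc => Rmax (K j) acc) 1 l.
Proof.
  elim: l => [|a l IH] /=; first lra.
  eapply Rle_trans; [apply IH| apply Rmax_r].
Qed.

Theorem proposition3p1 (n : nat) (F : ('I_n -> R) -> R) (s : R) :
  maps_into_Rplus F -> amenable F -> monotone F -> quasi_subadditive F s ->
  PnB F.
Proof.
  move=> Hpos Ham Hmon [Hs Hsub] X d Hd.
  have Fge0 : forall u, nonneg_vec u -> 0 <= F u by move=> u /Hpos.
  have Hscale : forall m : nat, exists c, 0 <= c /\ forall u, nonneg_vec u ->
      F (fun i => INR (S m) * u i) <= c * F u.
  { elim=> [|m [c [Hc IH]]].
    - exists 1; split; first lra. move=> u Hu.
      have -> : (fun i => INR 1 * u i) = u by apply functional_extensionality => i /=; lra.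
      lra.
    - exists (s * (c + 1)); split; first nra. move=> u Hu.
      have Hnm : nonneg_vec (fun i => INR (S m) * u i).
      { move=> i. apply Rmult_le_pos; [apply pos_INR| apply Hu]. }
      have -> : (fun i => INR (S (S m)) * u i) = (fun i => INR (S m) * u i + u i).
      { apply functional_extensionality => i. rewrite (S_INR (S m)). lra. }
      eapply Rle_trans; first by apply Hsub.
      have := IH u Hu. have := Fge0 u Hu. nra. }
  have Hdn : forall x y : (forall i, X i), nonneg_vec (fun i => d i (x i) (y i)).
  { move=> x y i. by case: (Hd i). }
  split; [|split; [|split]].
  - move=> x y. by apply Fge0.
  - move=> x y. rewrite (Ham _ (Hdn x y)). split.
    + move=> H. apply functional_extensionality_dep => i.
      case: (Hd i) => _ [H2 _]. by apply H2.
    + move=> -> i. case: (Hd i) => _ [H2 _]. by apply H2.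
  - move=> x y. f_equal. apply functional_extensionality => i.
    case: (Hd i) => _ [_ [H3 _]]. apply H3.
  - have HK : forall i, exists K, 1 <= K /\ forall x y z : X i,
        d i x z <= K * (d i x y + d i y z).
    { move=> i. by case: (Hd i) => _ [_ [_ H]]. }
    have [Ki HKi] : exists Ki : 'I_n -> R, forall i, 1 <= Ki i /\
        forall x y z : X i, d i x z <= Ki i * (d i x y + d i y z).
    { exists (fun i => proj1_sig (constructive_indefinite_description _ (HK i))).
      move=> i. exact: proj2_sig (constructive_indefinite_description _ (HK i)). }
    move: HKi => HKc.
    set K := foldr (fun j acc => Rmax (Ki j) acc) 1 (enum 'I_n).
    have HK1 : 1 <= K by apply fold_max_ge1.
    have HKi : forall i, Ki i <= K.
    { move=> i. apply fold_max_ge. by rewrite mem_enum. }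
    have [m Hm] := exists_nat_ge K.
    have [c [Hc Hcu]] := Hscale m. have Hcv := Hcu.
    exists (Rmax 1 (s * c)). split; first apply Rmax_l.
    move=> x y z.
    have HmS : K <= INR (S m) by rewrite S_INR; lra.
    set u := fun i => d i (x i) (y i).
    set v := fun i => d i (y i) (z i).
    have Hu : nonneg_vec u by apply Hdn.
    have Hv : nonneg_vec v by apply Hdn.
    have Hmu : nonneg_vec (fun i => INR (S m) * u i).
    { move=> i. apply Rmult_le_pos; [apply pos_INR| apply Hu]. }
    have Hmv : nonneg_vec (fun i => INR (S m) * v i).
    { move=> i. apply Rmult_le_pos; [apply pos_INR| apply Hv]. }
    have Hstep : F (fun i => d i (x i) (z i)) <=
        F (fun i => INR (S m) * u i + INR (S m) * v i).
    { apply Hmon; first apply Hdn.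
      - move=> i. have := Hmu i. have := Hmv i. simpl. lra.
      - move=> i. have [_ Ht] := HKc i. have := Ht (x i) (y i) (z i).
        have := HKi i. have := Hu i. have := Hv i. rewrite /u /v => *. nra. }
    eapply Rle_trans; first exact Hstep.
    eapply Rle_trans; first by apply Hsub.
    have := Hcu u Hu. have := Hcv v Hv. have := Fge0 u Hu. have := Fge0 v Hv.
    have := Rmax_r 1 (s * c). move=> *. nra.
Qed.
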